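(* Let $h>0$ and $\mathbb{T}:=\{0,h,2h,\ldots\}$. Let $p_0,p_1\in\mathbb{C}\setminus\{-\tfrac{1}{h}\}$ with $p_0\ne p_1$ and $0<|1+hp_0||1+hp_1|\ne 1$, and define $p:\mathbb{T}\to\mathbb{C}$ by $p(t)=p_0$ if $\tfrac{t}{h}$ is even and $p(t)=p_1$ if $\tfrac{t}{h}$ is odd. Then the equation $\Delta_h x(t)-p(t)x(t)=0$, $t\in\mathbb{T}$, where $\Delta_hx(t):=\frac{x(t+h)-x(t)}{h}$, has Ulam stability on $\mathbb{T}$ with Ulam stability constant $$K_0:=h\max\left\{\frac{1+|1+hp_0|}{\big|1-|1+hp_0||1+hp_1|\big|},\ \frac{1+|1+hp_1|}{\big|1-|1+hp_0||1+hp_1|\big|}\right\}.$$ Moreover, if $|1+hp_0||1+hp_1|>1$, then $K_0$ is the minimum Ulam stability constant for this equation.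
   Context: A constant $K>0$ is an Ulam stability constant for the equation on $\mathbb{T}$ if for every $\varepsilon>0$ and every $\phi:\mathbb{T}\to\mathbb{C}$ with $|\Delta_h\phi(t)-p(t)\phi(t)|\le\varepsilon$ for all $t\in\mathbb{T}$, there exists a solution $x:\mathbb{T}\to\mathbb{C}$ of the equation with $|\phi(t)-x(t)|\le K\varepsilon$ for all $t\in\mathbb{T}$; the equation has Ulam stability if such $K$ exists. ''Minimum'' means no positive number smaller than $K_0$ is an Ulam stability constant. *)

(* Defs.v *)
From Stdlib Require Import Reals.
From Coquelicot Require Import Coquelicot.
Open Scope R_scope.

(* The time scale T = {0, h, 2h, ...} is identified with nat via n |-> n*h;
   a function on T is thus a sequence nat -> C, and t = n*h. *)

Definition p_per (p0 p1 : C) (n : nat) : C :=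
  if Nat.even n then p0 else p1.

Definition delta_h (h : R) (x : nat -> C) (n : nat) : C :=
  Cdiv (Cminus (x (S n)) (x n)) (RtoC h).

Definition ulam_constant (h : R) (p : nat -> C) (K : R) : Prop :=
  0 < K /\
  forall eps : R, 0 < eps ->
  forall phi : nat -> C,
    (forall n, Cmod (Cminus (delta_h h phi n) (Cmult (p n) (phi n))) <= eps) ->
    exists x : nat -> C,
      (forall n, Cminus (delta_h h x n) (Cmult (p n) (x n)) = RtoC 0) /\
      (forall n, Cmod (Cminus (phi n) (x n)) <= K * eps).

Definition K0 (h : R) (p0 p1 : C) : R :=
  let a0 := Cmod (Cplus (RtoC 1) (Cmult (RtoC h) p0)) in
  let a1 := Cmod (Cplus (RtoC 1) (Cmult (RtoC h) p1)) in
  h * Rmax ((1 + a0) / Rabs (1 - a0 * a1)) ((1 + a1) / Rabs (1 - a0 * a1)).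

(* Main.v *)
Require Import Defs.
From Stdlib Require Import Reals Lra Lia.
From Coquelicot Require Import Coquelicot.
Open Scope R_scope.

Definition aa (h : R) (p0 p1 : C) (n : nat) : C :=
  Cplus (RtoC 1) (Cmult (RtoC h) (p_per p0 p1 n)).

Lemma RtoC_neq0 (h : R) : h <> 0 -> RtoC h <> RtoC 0.
Proof. intros H E. apply H. injection E. auto. Qed.

Lemma key_eq (h : R) (p0 p1 : C) (x : nat -> C) n : 0 < h ->
  Cminus (delta_h h x n) (Cmult (p_per p0 p1 n) (x n)) =
  Cdiv (Cminus (x (S n)) (Cmult (aa h p0 p1 n) (x n))) (RtoC h).
Proof.
  intros hh. unfold delta_h, aa.
  assert (RtoC h <> RtoC 0) by (apply RtoC_neq0; lra).
  field. auto.
Qed.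

Lemma Cmod_divR (z : C) (h : R) : 0 < h -> Cmod (Cdiv z (RtoC h)) = Cmod z / h.
Proof.
  intros hh. rewrite Cmod_div. rewrite Cmod_R, Rabs_pos_eq by lra. reflexivity.
  apply RtoC_neq0; lra.
Qed.

Lemma Cmod_le_sum (a b : R) : Cmod (a, b) <= Rabs a + Rabs b.
Proof.
  unfold Cmod; cbn [fst snd].
  rewrite <- (sqrt_pow2 (Rabs a + Rabs b)) by (pose proof (Rabs_pos a); pose proof (Rabs_pos b); lra).
  apply sqrt_le_1_alt.
  pose proof (pow2_abs a); pose proof (pow2_abs b).
  pose proof (Rabs_pos a); pose proof (Rabs_pos b). nra.
Qed.

Lemma even_2k k : Nat.even (2 * k) = true.
Proof. rewrite Nat.even_mul. reflexivity. Qed.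
Lemma even_2k1 k : Nat.even (S (2 * k)) = false.
Proof. rewrite Nat.even_succ, <- Nat.negb_even, even_2k. reflexivity. Qed.
Lemma step2 (a : nat -> C) a0 a1 (e f : nat -> C)
  (Ha0 : forall k, a (2*k)%nat = a0) (Ha1 : forall k, a (S (2*k)) = a1)
  (He : forall n, e (S n) = Cplus (Cmult (a n) (e n)) (f n)) k :
  e (2 * S k)%nat = Cplus (Cmult (Cmult a0 a1) (e (2*k)%nat))
                         (Cplus (Cmult a1 (f (2*k)%nat)) (f (S (2*k)))).
Proof.
  replace (2 * S k)%nat with (S (S (2*k))) by lia.
  rewrite He, He, Ha0, Ha1. ring.
Qed.

Lemma small_case (a : nat -> C) a0 a1 (e f : nat -> C) d
  (Ha0 : forall k, a (2*k)%nat = a0) (Ha1 : forall k, a (S (2*k)) = a1)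
  (He : forall n, e (S n) = Cplus (Cmult (a n) (e n)) (f n))
  (Hf : forall n, Cmod (f n) <= d) (hr : Cmod a0 * Cmod a1 < 1) (e0 : e 0%nat = RtoC 0) :
  forall k, Cmod (e (2*k)%nat) <= (1 + Cmod a1) * d / (1 - Cmod a0 * Cmod a1) /\
            Cmod (e (S (2*k))) <= (1 + Cmod a0) * d / (1 - Cmod a0 * Cmod a1).
Proof.
  set (A0 := Cmod a0) in *. set (A1 := Cmod a1) in *.
  assert (hA0 : 0 <= A0) by apply Cmod_ge_0.
  assert (hA1 : 0 <= A1) by apply Cmod_ge_0.
  assert (hr0 : 0 <= A0 * A1) by nra.
  assert (hd : 0 <= d) by (pose proof (Hf 0%nat); pose proof (Cmod_ge_0 (f 0%nat)); lra).
  assert (Hev : forall k, Cmod (e (2*k)%nat) * (1 - A0 * A1) <= (1 + A1) * d).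
  { induction k as [|k IH].
    - simpl. rewrite e0, Cmod_0. nra.
    - rewrite (step2 a a0 a1 e f Ha0 Ha1 He k).
      pose proof (Cmod_triangle (Cmult (Cmult a0 a1) (e (2*k)%nat))
                   (Cplus (Cmult a1 (f (2*k)%nat)) (f (S (2*k))))).
      pose proof (Cmod_triangle (Cmult a1 (f (2*k)%nat)) (f (S (2*k)))).
      rewrite !Cmod_mult in H, H0. fold A0 A1 in H. fold A1 in H0.
      pose proof (Hf (2*k)%nat). pose proof (Hf (S (2*k))).
      pose proof (Cmod_ge_0 (e (2*k)%nat)).
      pose proof (Cmod_ge_0 (f (2*k)%nat)).
      set (X := Cmod (e (2*k)%nat)) in *.
      set (Y := Cmod (Cplus (Cmult (Cmult a0 a1) (e (2 * k)%nat))
           (Cplus (Cmult a1 (f (2 * k)%nat)) (f (S (2 * k)))))) in *.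
      rewrite (Cmod_mult a0 a1) in H. fold A0 A1 in H.
      assert (A1 * Cmod (f (2*k)%nat) <= A1 * d) by (apply Rmult_le_compat_l; lra).
      assert (Y <= A0 * A1 * X + (1 + A1) * d) by lra.
      nra. }
  intros k. split.
  - pose proof (Hev k). apply (Rmult_le_reg_r (1 - A0 * A1)); [lra|].
    unfold Rdiv. rewrite Rmult_assoc, Rinv_l by lra. lra.
  - pose proof (Hev k). rewrite He, Ha0.
    pose proof (Cmod_triangle (Cmult a0 (e (2*k)%nat)) (f (2*k)%nat)).
    rewrite Cmod_mult in H0. fold A0 in H0.
    pose proof (Hf (2*k)%nat).
    pose proof (Cmod_ge_0 (e (2*k)%nat)).
    set (X := Cmod (e (2*k)%nat)) in *.
    apply (Rmult_le_reg_r (1 - A0 * A1)); [lra|].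
    unfold Rdiv. rewrite Rmult_assoc, Rinv_l by lra.
    nra.
Qed.
Fixpoint Pseq (Q : C) (g : nat -> C) (N : nat) : C :=
  match N with
  | O => RtoC 0
  | S N' => Cplus (Pseq Q g N') (Cdiv (g N') (Cpow Q (S N')))
  end.

Lemma large_case (a : nat -> C) a0 a1 (f : nat -> C) d
  (Ha0 : forall k, a (2*k)%nat = a0) (Ha1 : forall k, a (S (2*k)) = a1)
  (Hf : forall n, Cmod (f n) <= d) (hr : 1 < Cmod a0 * Cmod a1) :
  exists c : C, forall e : nat -> C,
  (forall n, e (S n) = Cplus (Cmult (a n) (e n)) (f n)) -> e 0%nat = c ->
  forall k, Cmod (e (2*k)%nat) <= (1 + Cmod a1) * d / (Cmod a0 * Cmod a1 - 1) /\
            Cmod (e (S (2*k))) <= (1 + Cmod a0) * d / (Cmod a0 * Cmod a1 - 1).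
Proof.
  set (A0 := Cmod a0) in *. set (A1 := Cmod a1) in *.
  assert (hA0 : 0 <= A0) by apply Cmod_ge_0.
  assert (hA1 : 0 <= A1) by apply Cmod_ge_0.
  assert (hA0p : 0 < A0) by (destruct hA0; auto; rewrite <- H in hr; lra).
  assert (hA1p : 0 < A1) by (destruct hA1; auto; rewrite <- H in hr; lra).
  assert (hd : 0 <= d) by (pose proof (Hf 0%nat); pose proof (Cmod_ge_0 (f 0%nat)); lra).
  set (r := A0 * A1) in *.
  set (Q := Cmult a0 a1).
  assert (HQ : Cmod Q = r) by (unfold Q; rewrite Cmod_mult; reflexivity).
  assert (HQk : forall k, Cmod (Cpow Q k) = r ^ k) by (intros; rewrite Cmod_pow, HQ; auto).
  assert (HQk0 : forall k, Cpow Q k <> RtoC 0).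
  { intros k E. pose proof (HQk k). rewrite E, Cmod_0 in H.
    pose proof (pow_lt r k ltac:(lra)). lra. }
  set (g := fun N => Cplus (Cmult a1 (f (2*N)%nat)) (f (S (2*N)))).
  set (B := (1 + A1) * d).
  assert (Hg : forall N, Cmod (g N) <= B).
  { intros N. unfold g, B. eapply Rle_trans. apply Cmod_triangle.
    rewrite Cmod_mult. fold A1. pose proof (Hf (2*N)%nat). pose proof (Hf (S (2*N))).
    assert (A1 * Cmod (f (2*N)%nat) <= A1 * d) by (apply Rmult_le_compat_l; lra). lra. }
  set (P := Pseq Q g).
  set (u := / r).
  assert (hu0 : 0 < u) by (unfold u; apply Rinv_0_lt_compat; lra).
  assert (hu1 : u < 1) by (unfold u; rewrite <- Rinv_1; apply Rinv_lt_contravar; lra).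
  assert (hru : r * u = 1) by (unfold u; field; lra).
  assert (Hterm : forall N, Cmod (Cdiv (g N) (Cpow Q (S N))) <= B * u ^ (S N)).
  { intros N. rewrite Cmod_div by auto. rewrite HQk. unfold u. rewrite pow_inv.
    unfold Rdiv. apply Rmult_le_compat_r. left; apply Rinv_0_lt_compat, pow_lt; lra. auto. }
  assert (Htail : forall k m, Cmod (Cminus (P (k + m)%nat) (P k)) <= B * u ^ k * (1 - u ^ m) / (r - 1)).
  { intros k m. induction m as [|m IH].
    - rewrite Nat.add_0_r. replace (Cminus (P k) (P k)) with (RtoC 0) by ring.
      rewrite Cmod_0. simpl. unfold Rdiv. rewrite Rminus_diag. lra.
    - rewrite Nat.add_succ_r.
      change (P (S (k+m))) with (Cplus (P (k+m)%nat) (Cdiv (g (k+m)%nat) (Cpow Q (S (k+m))))).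
      replace (Cminus (Cplus (P (k + m)%nat) (Cdiv (g (k + m)%nat) (Cpow Q (S (k + m)))))  (P k))
        with (Cplus (Cminus (P (k + m)%nat) (P k)) (Cdiv (g (k + m)%nat) (Cpow Q (S (k + m))))) by ring.
      eapply Rle_trans. apply Cmod_triangle.
      pose proof (Hterm (k + m)%nat).
      replace (B * u ^ k * (1 - u ^ S m) / (r - 1))
        with (B * u ^ k * (1 - u ^ m) / (r - 1) + B * u ^ S (k + m)).
      lra.
      rewrite <- Nat.add_succ_r, pow_add. simpl pow. unfold u. field. lra. }
  assert (Htail' : forall k n, (k <= n)%nat -> Cmod (Cminus (P n) (P k)) <= B * u ^ k / (r - 1)).
  { intros k n Hkn. replace n with (k + (n - k))%nat by lia.
    eapply Rle_trans. apply Htail.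
    pose proof (pow_lt u (n - k) hu0). pose proof (pow_lt u k hu0).
    unfold Rdiv. apply Rmult_le_compat_r. left; apply Rinv_0_lt_compat; lra.
    assert (0 <= B) by (unfold B; nra).
    assert (0 <= B * u ^ k * u ^ (n - k)) by (apply Rmult_le_pos; [apply Rmult_le_pos|]; lra). nra. }
  assert (hB : 0 <= B) by (unfold B; nra).
  assert (Hcauchy : forall eps, 0 < eps -> exists N, forall n m, (n >= N)%nat -> (m >= N)%nat ->
            Cmod (Cminus (P n) (P m)) < eps).
  { intros eps heps.
    set (y := eps * (r - 1) / (2 * B + 1)).
    assert (hy : 0 < y) by (unfold y; apply Rdiv_lt_0_compat; nra).
    assert (hy2 : y * (2 * B + 1) = eps * (r - 1)) by (unfold y; field; lra).
    destruct (pow_lt_1_zero u ltac:(rewrite Rabs_pos_eq; lra) y hy) as [N HN].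
    exists N. intros n m hn hm.
    pose proof (HN N (le_n N)) as Ht. rewrite Rabs_pos_eq in Ht by (left; apply pow_lt; lra).
    replace (Cminus (P n) (P m)) with (Cplus (Cminus (P n) (P N)) (Copp (Cminus (P m) (P N)))) by ring.
    eapply Rle_lt_trans. apply Cmod_triangle. rewrite Cmod_opp.
    pose proof (Htail' N n hn). pose proof (Htail' N m hm).
    assert (2 * B * u ^ N / (r - 1) < eps).
    { apply Rmult_lt_reg_r with (r - 1); [lra|]. unfold Rdiv.
      rewrite Rmult_assoc, Rinv_l, Rmult_1_r by lra.
      pose proof (pow_lt u N hu0). nra. }
    unfold Rdiv in *. lra. }
  assert (Hc1 : Cauchy_crit (fun n => fst (P n))).
  { intros eps heps. destruct (Hcauchy eps heps) as [N HN]. exists N.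
    intros n m hn hm. unfold R_dist. eapply Rle_lt_trans; [|apply (HN n m hn hm)].
    exact (re_le_Cmod (Cminus (P n) (P m))). }
  assert (Hc2 : Cauchy_crit (fun n => snd (P n))).
  { intros eps heps. destruct (Hcauchy eps heps) as [N HN]. exists N.
    intros n m hn hm. unfold R_dist. eapply Rle_lt_trans; [|apply (HN n m hn hm)].
    eapply Rle_trans; [|exact (Rmax_Cmod (Cminus (P n) (P m)))]. apply Rmax_r. }
  destruct (Rcomplete.R_complete _ Hc1) as [Sre HSre].
  destruct (Rcomplete.R_complete _ Hc2) as [Sim HSim].
  set (Sl := (Sre, Sim) : C).
  assert (Hlim : forall del, 0 < del -> exists N0, forall n, (n >= N0)%nat -> Cmod (Cminus (P n) Sl) < del).
  { intros del hdel.
    destruct (HSre (del/2) ltac:(lra)) as [N1 HN1].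
    destruct (HSim (del/2) ltac:(lra)) as [N2 HN2].
    exists (max N1 N2). intros n hn.
    replace (Cminus (P n) Sl) with ((fst (P n) - Sre, snd (P n) - Sim) : C)
      by (unfold Sl; destruct (P n); reflexivity).
    eapply Rle_lt_trans. apply Cmod_le_sum.
    pose proof (HN1 n ltac:(lia)). pose proof (HN2 n ltac:(lia)). unfold R_dist in *. lra. }
  exists (Copp Sl). intros e He e0.
  assert (Hform : forall k, e (2*k)%nat = Cmult (Cpow Q k) (Cplus (e 0%nat) (P k))).
  { induction k as [|k IH].
    - simpl. unfold P. simpl. ring.
    - rewrite (step2 a a0 a1 e f Ha0 Ha1 He k). fold Q. rewrite IH.
      change (P (S k)) with (Cplus (P k) (Cdiv (g k) (Cpow Q (S k)))).
      change (Cplus (Cmult a1 (f (2 * k)%nat)) (f (S (2 * k)))) with (g k).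
      pose proof (HQk0 (S k)). change (Cpow Q (S k)) with (Cmult Q (Cpow Q k)) in *.
      field. split; auto. intro E. rewrite E, Cmod_0 in HQ. lra. }
  assert (Hev : forall k, Cmod (e (2*k)%nat) <= B / (r - 1)).
  { intros k. apply Rle_plus_epsilon. intros eta heta.
    assert (hrk : 0 < r ^ k) by (apply pow_lt; lra).
    destruct (Hlim (eta / r ^ k) ltac:(apply Rdiv_lt_0_compat; lra)) as [N0 HN0].
    rewrite Hform, e0, Cmod_mult, HQk.
    replace (Cplus (Copp Sl) (P k)) with
      (Cplus (Copp (Cminus (P (k + N0)%nat) (P k))) (Cminus (P (k + N0)%nat) Sl)) by ring.
    pose proof (Cmod_triangle (Copp (Cminus (P (k + N0)%nat) (P k))) (Cminus (P (k + N0)%nat) Sl)).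
    rewrite Cmod_opp in H.
    pose proof (Htail' k (k + N0)%nat ltac:(lia)).
    pose proof (HN0 (k + N0)%nat ltac:(lia)).
    assert (hruk : r ^ k * u ^ k = 1) by (rewrite <- Rpow_mult_distr, hru; apply pow1).
    set (Z := Cmod (Cplus (Copp (Cminus (P (k + N0)%nat) (P k))) (Cminus (P (k + N0)%nat) Sl))) in *.
    assert (Z <= B * u ^ k / (r - 1) + eta / r ^ k) by lra.
    apply Rle_trans with (r ^ k * (B * u ^ k / (r - 1) + eta / r ^ k)).
    apply Rmult_le_compat_l; lra.
    right. unfold Rdiv. rewrite Rmult_plus_distr_l.
    replace (r ^ k * (B * u ^ k * / (r - 1))) with (B * / (r - 1) * (r ^ k * u ^ k)) by ring.
    rewrite hruk. field. lra. }
  intros k. split.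
  - apply Hev.
  - pose proof (Hev (S k)) as H1.
    replace (2 * S k)%nat with (S (S (2*k))) in H1 by lia.
    rewrite He, Ha1 in H1.
    pose proof (Cmod_triangle (Cplus (Cmult a1 (e (S (2*k)))) (f (S (2*k)))) (Copp (f (S (2*k))))).
    replace (Cplus (Cplus (Cmult a1 (e (S (2*k)))) (f (S (2*k)))) (Copp (f (S (2*k)))))
      with (Cmult a1 (e (S (2*k)))) in H by ring.
    rewrite Cmod_mult, Cmod_opp in H. fold A1 in H.
    pose proof (Hf (S (2*k))).
    apply Rmult_le_reg_l with A1; auto.
    replace (A1 * ((1 + A0) * d / (r - 1))) with (B / (r - 1) + d) by (unfold B, r; field; unfold r in hr; lra).
    lra.
Qed.

Fixpoint pw (a : nat -> C) (n : nat) : C :=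
  match n with O => RtoC 1 | S n' => Cmult (a n') (pw a n') end.

Fixpoint vph (a : nat -> C) (n : nat) : C :=
  match n with O => RtoC 1 | S n' => Cmult (Cdiv (a n') (RtoC (Cmod (a n')))) (vph a n') end.

Lemma fin_bound X D h eps M : 0 < h -> 0 < eps -> 0 < D -> X / D <= M ->
  X * (h * eps) / D <= h * M * eps.
Proof.
  intros. replace (X * (h * eps) / D) with ((h * eps) * (X / D)) by (field; lra).
  replace (h * M * eps) with ((h * eps) * M) by ring.
  apply Rmult_le_compat_l; nra.
Qed.

Lemma RtoC_lin x y z : RtoC (x - y * z) = Cminus (RtoC x) (Cmult (RtoC y) (RtoC z)).
Proof. unfold RtoC, Cminus, Cmult, Cplus, Copp; simpl. f_equal; ring. Qed.

Theorem theorem2p3 (h : R) (p0 p1 : C)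
  (hh : 0 < h)
  (hp0 : p0 <> RtoC (- (1 / h)))
  (hp1 : p1 <> RtoC (- (1 / h)))
  (hne : p0 <> p1)
  (hpos : 0 < Cmod (Cplus (RtoC 1) (Cmult (RtoC h) p0))
              * Cmod (Cplus (RtoC 1) (Cmult (RtoC h) p1)))
  (hne1 : Cmod (Cplus (RtoC 1) (Cmult (RtoC h) p0))
          * Cmod (Cplus (RtoC 1) (Cmult (RtoC h) p1)) <> 1) :
  ulam_constant h (p_per p0 p1) (K0 h p0 p1) /\
  (1 < Cmod (Cplus (RtoC 1) (Cmult (RtoC h) p0))
       * Cmod (Cplus (RtoC 1) (Cmult (RtoC h) p1)) ->
   forall K : R, 0 < K -> K < K0 h p0 p1 ->
     ~ ulam_constant h (p_per p0 p1) K).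
Proof.
  set (a0 := Cplus (RtoC 1) (Cmult (RtoC h) p0)) in *.
  set (a1 := Cplus (RtoC 1) (Cmult (RtoC h) p1)) in *.
  set (A0 := Cmod a0) in *. set (A1 := Cmod a1) in *.
  assert (hA0 : 0 <= A0) by apply Cmod_ge_0.
  assert (hA1 : 0 <= A1) by apply Cmod_ge_0.
  assert (hA0p : 0 < A0) by (destruct hA0; auto; rewrite <- H in hpos; lra).
  assert (hA1p : 0 < A1) by (destruct hA1; auto; rewrite <- H in hpos; lra).
  set (a := aa h p0 p1).
  assert (Ha0 : forall k, a (2*k)%nat = a0) by (intros; unfold a, aa, p_per; rewrite even_2k; reflexivity).
  assert (Ha1 : forall k, a (S (2*k)) = a1) by (intros; unfold a, aa, p_per; rewrite even_2k1; reflexivity).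
  assert (HK0 : K0 h p0 p1 = h * Rmax ((1 + A0) / Rabs (1 - A0 * A1)) ((1 + A1) / Rabs (1 - A0 * A1)))
    by reflexivity.
  assert (hD : 0 < Rabs (1 - A0 * A1)) by (apply Rabs_pos_lt; lra).
  assert (HM0 : (1 + A0) / Rabs (1 - A0 * A1) <= Rmax ((1 + A0) / Rabs (1 - A0 * A1)) ((1 + A1) / Rabs (1 - A0 * A1))) by apply Rmax_l.
  assert (HM1 : (1 + A1) / Rabs (1 - A0 * A1) <= Rmax ((1 + A0) / Rabs (1 - A0 * A1)) ((1 + A1) / Rabs (1 - A0 * A1))) by apply Rmax_r.
  set (M := Rmax ((1 + A0) / Rabs (1 - A0 * A1)) ((1 + A1) / Rabs (1 - A0 * A1))) in *.
  assert (hM : 0 < (1 + A0) / Rabs (1 - A0 * A1)) by (apply Rdiv_lt_0_compat; lra).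
  split.
  - split. { rewrite HK0. nra. }
    intros eps heps phi Hphi.
    set (f := fun n => Cminus (phi (S n)) (Cmult (a n) (phi n))).
    assert (Hf : forall n, Cmod (f n) <= h * eps).
    { intros n. pose proof (Hphi n). rewrite key_eq, Cmod_divR in H by lra.
      unfold f. fold a in H. apply (Rmult_le_reg_r (/ h)). apply Rinv_0_lt_compat; lra.
      replace (h * eps * / h) with eps by (field; lra). exact H. }
    assert (Hsol : forall c n, Cminus (delta_h h (fun m => Cmult c (pw a m)) n)
                     (Cmult (p_per p0 p1 n) (Cmult c (pw a n))) = RtoC 0).
    { intros c n. rewrite key_eq by lra. fold a. simpl pw. unfold Cdiv. ring. }
    assert (He : forall c n, (fun m => Cminus (phi m) (Cmult c (pw a m))) (S n) =
       Cplus (Cmult (a n) ((fun m => Cminus (phi m) (Cmult c (pw a m))) n)) (f n)).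
    { intros c n. unfold f. simpl pw. ring. }
    assert (Hfin : forall (e : nat -> C) D, 0 < D -> D = Rabs (1 - A0 * A1) ->
       (forall k, Cmod (e (2*k)%nat) <= (1 + A1) * (h * eps) / D /\
                  Cmod (e (S (2*k))) <= (1 + A0) * (h * eps) / D) ->
       forall n, Cmod (e n) <= K0 h p0 p1 * eps).
    { intros e D hD0 HD Hk n. rewrite HK0. subst D.
      destruct (Nat.Even_or_Odd n) as [[k ->]|[k ->]].
      - eapply Rle_trans. apply (Hk k). apply fin_bound; auto.
      - replace (2 * k + 1)%nat with (S (2 * k)) by lia.
        eapply Rle_trans. apply (Hk k). apply fin_bound; auto. }
    destruct (Rlt_le_dec (A0 * A1) 1) as [hr|hr].
    + exists (fun m => Cmult (phi 0%nat) (pw a m)). split; [apply Hsol|].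
      apply (Hfin _ (1 - A0 * A1)). lra. rewrite Rabs_pos_eq; lra.
      apply (small_case a a0 a1 _ f (h * eps) Ha0 Ha1 (He (phi 0%nat)) Hf hr).
      simpl. ring.
    + assert (hr' : 1 < A0 * A1) by lra.
      destruct (large_case a a0 a1 f (h * eps) Ha0 Ha1 Hf hr') as [c Hc].
      exists (fun m => Cmult (Cminus (phi 0%nat) c) (pw a m)). split; [apply Hsol|].
      apply (Hfin _ (A0 * A1 - 1)). lra. rewrite Rabs_minus_sym, Rabs_pos_eq; lra.
      apply (Hc _ (He _)). simpl. ring.
  - intros hr K hK hKlt [_ Hul].
    assert (hr1 : 0 < A0 * A1 - 1) by lra.
    set (L0 := h * (1 + A1) / (A0 * A1 - 1)).
    set (L1 := h * (1 + A0) / (A0 * A1 - 1)).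
    assert (hL0 : 0 < L0) by (unfold L0; apply Rdiv_lt_0_compat; nra).
    assert (hL1 : 0 < L1) by (unfold L1; apply Rdiv_lt_0_compat; nra).
    set (s := fun n => if Nat.even n then L0 else L1).
    assert (Hacase : forall n, (a n = a0 /\ Nat.even n = true) \/ (a n = a1 /\ Nat.even n = false)).
    { intros n. unfold a, aa, p_per. destruct (Nat.even n); [left|right]; split; reflexivity. }
    assert (HAn : forall n, 0 < Cmod (a n)).
    { intros n. destruct (Hacase n) as [[E _]|[E _]]; rewrite E; auto. }
    assert (HCn : forall n, RtoC (Cmod (a n)) <> RtoC 0).
    { intros n. apply RtoC_neq0. pose proof (HAn n). lra. }
    set (v := vph a).
    assert (Hv : forall n, Cmod (v n) = 1).
    { induction n as [|n IH]. simpl. apply Cmod_1.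
      unfold v; simpl vph; fold v. rewrite Cmod_mult, Cmod_div, Cmod_R, Rabs_pos_eq, IH by (auto; pose proof (HAn n); lra).
      field. pose proof (HAn n); lra. }
    assert (Hstep : forall n, s (S n) - Cmod (a n) * s n = - h).
    { intros n. unfold s. rewrite Nat.even_succ, <- Nat.negb_even.
      destruct (Hacase n) as [[E1 E2]|[E1 E2]]; rewrite E1, E2; simpl; fold A0 A1; unfold L0, L1; field; lra. }
    set (phi := fun n => Cmult (RtoC (s n)) (v n)).
    assert (Hphi : forall n, Cmod (Cminus (delta_h h phi n) (Cmult (p_per p0 p1 n) (phi n))) <= 1).
    { intros n. rewrite key_eq, Cmod_divR by lra. fold a.
      replace (Cminus (phi (S n)) (Cmult (a n) (phi n))) with
        (Cmult (Cmult (Cdiv (a n) (RtoC (Cmod (a n)))) (v n)) (RtoC (s (S n) - Cmod (a n) * s n))).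
      2:{ rewrite RtoC_lin. unfold phi, v; simpl vph. field. auto. }
      rewrite Hstep, Cmod_mult, Cmod_mult, Cmod_div, Cmod_R, Cmod_R, Rabs_Ropp, Hv by auto. rewrite (Rabs_pos_eq h) by lra. rewrite (Rabs_pos_eq (Cmod (a n))) by (apply Cmod_ge_0).
      pose proof (HAn n). right. field. split; lra. }
    destruct (Hul 1 Rlt_0_1 phi Hphi) as [x [Hx Hb]].
    assert (Hxrec : forall n, x (S n) = Cplus (Cmult (a n) (x n)) ((fun _ => RtoC 0) n)).
    { intros n. pose proof (Hx n) as H. rewrite key_eq in H by lra. fold a in H.
      set (D := Cminus (x (S n)) (Cmult (a n) (x n))) in *.
      assert (HD : D = Cmult (Cdiv D (RtoC h)) (RtoC h)) by (field; apply RtoC_neq0; lra).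
      rewrite H in HD.
      replace (x (S n)) with (Cplus D (Cmult (a n) (x n))) by (unfold D; ring).
      rewrite HD. ring. }
    assert (Hxe : forall k, Cmod (x (2*k)%nat) = (A0 * A1) ^ k * Cmod (x 0%nat)).
    { induction k as [|k IH]. simpl. ring.
      rewrite (step2 a a0 a1 x (fun _ => RtoC 0) Ha0 Ha1 Hxrec k).
      replace (Cplus (Cmult (Cmult a0 a1) (x (2 * k)%nat)) (Cplus (Cmult a1 (RtoC 0)) (RtoC 0)))
        with (Cmult (Cmult a0 a1) (x (2 * k)%nat)) by ring.
      rewrite Cmod_mult, Cmod_mult, IH. fold A0 A1. simpl. ring. }
    assert (Hphin : forall n, Cmod (phi n) = s n).
    { intros n. unfold phi. rewrite Cmod_mult, Hv, Cmod_R, Rabs_pos_eq. ring.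
      unfold s; destruct (Nat.even n); lra. }
    assert (Hxb : forall n, Cmod (x n) <= L0 + L1 + K).
    { intros n. replace (x n) with (Cplus (phi n) (Copp (Cminus (phi n) (x n)))) by ring.
      eapply Rle_trans. apply Cmod_triangle. rewrite Cmod_opp, Hphin.
      pose proof (Hb n). unfold s; destruct (Nat.even n); lra. }
    assert (Hx0 : x 0%nat = RtoC 0).
    { destruct (Req_dec (Cmod (x 0%nat)) 0) as [E|E]. apply Cmod_eq_0; auto.
      exfalso. pose proof (Cmod_ge_0 (x 0%nat)).
      set (u := / (A0 * A1)).
      assert (hu0 : 0 < u) by (unfold u; apply Rinv_0_lt_compat; lra).
      assert (hu1 : u < 1) by (unfold u; rewrite <- Rinv_1; apply Rinv_lt_contravar; lra).
      set (y := Cmod (x 0%nat) / (L0 + L1 + K + 1)).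
      assert (hy : 0 < y) by (unfold y; apply Rdiv_lt_0_compat; lra).
      destruct (pow_lt_1_zero u ltac:(rewrite Rabs_pos_eq; lra) y hy) as [N HN].
      pose proof (HN N (le_n N)) as Ht. rewrite Rabs_pos_eq in Ht by (left; apply pow_lt; lra).
      assert (hru : (A0 * A1) ^ N * u ^ N = 1)
        by (rewrite <- Rpow_mult_distr; unfold u; rewrite Rinv_r by lra; apply pow1).
      assert (hy2 : y * (L0 + L1 + K + 1) = Cmod (x 0%nat)) by (unfold y; field; lra).
      pose proof (Hxb (2 * N)%nat). rewrite Hxe in H0.
      pose proof (pow_lt (A0 * A1) N ltac:(lra)).
      pose proof (pow_lt u N hu0).
      assert (u ^ N * (L0 + L1 + K + 1) < Cmod (x 0%nat)) by nra.
      nra. }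
    assert (Hxz : forall n, x n = RtoC 0).
    { induction n as [|n IH]. auto. rewrite Hxrec, IH. ring. }
    pose proof (Hb 0%nat) as B0. pose proof (Hb 1%nat) as B1.
    rewrite Hxz in B0, B1.
    replace (Cminus (phi 0%nat) (RtoC 0)) with (phi 0%nat) in B0 by ring.
    replace (Cminus (phi 1%nat) (RtoC 0)) with (phi 1%nat) in B1 by ring.
    rewrite Hphin in B0, B1. unfold s in B0, B1. simpl in B0, B1.
    assert (K0 h p0 p1 <= K).
    { rewrite HK0. unfold M. rewrite Rabs_minus_sym, Rabs_pos_eq by lra.
      unfold Rmax. destruct (Rle_dec _ _).
      - replace (h * ((1 + A1) / (A0 * A1 - 1))) with L0 by (unfold L0; field; lra). lra.
      - replace (h * ((1 + A0) / (A0 * A1 - 1))) with L1 by (unfold L1; field; lra). lra. }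
    lra.
Qed.
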